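(* Let $M,N$ be positive integers and $P_s>0$. Let $\{x[k,l] : 0\le k\le N-1,\ 0\le l\le M-1\}$ be independent and identically distributed QPSK symbols of power $P_s$, i.e. each $x[k,l]$ is uniformly distributed on $\{\sqrt{P_s/2}\,(\pm 1 \pm \mathrm{i})\}$ (so $|x[k,l]|^2=P_s$). Define the matrix $\widetilde{\mathbf{X}}\in\mathbb{C}^{MN\times MN}$ as follows: for row index $p=k'+Nl'$ and column index $q=k''+Nl''$ with $0\le k',k''\le N-1$ and $0\le l',l''\le M-1$, $$ \widetilde{\mathbf{X}}[p,q]=\begin{cases} x\big[[k'-k'']_N,[l'-l'']_M\big]\, e^{-\mathrm{i}2\pi\frac{k'}{N}}\, e^{\mathrm{i}2\pi\frac{(k'')_N\,[l'-l'']_M}{MN}} & \text{if } l'<l'',\\[4pt] x\big[[k'-k'']_N,[l'-l'']_M\big]\, e^{\mathrm{i}2\pi\frac{(k'')_N\,[l'-l'']_M}{MN}} & \text{otherwise,} \end{cases} $$ and let $\mathbf{G}=\widetilde{\mathbf{X}}^{\mathrm H}\widetilde{\mathbf{X}}\in\mathbb{C}^{MN\times MN}$. Then for every off-diagonal entry, i.e. every $0\le p\ne q\le MN-1$, $$ \mathbb{E}\big[\mathbf{G}[p,q]\big]=0,\qquad \operatorname{var}\big[\mathbf{G}[p,q]\big]=MNP_s^2 . $$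
   Context: $\mathrm{i}$ denotes the imaginary unit and $\widetilde{\mathbf{X}}^{\mathrm H}$ the conjugate transpose. $[a]_N$ and $[a]_M$ denote the residues of the integer $a$ modulo $N$ and modulo $M$ (in $\{0,\dots,N-1\}$ and $\{0,\dots,M-1\}$ respectively). For an integer $0\le k\le N-1$, $(k)_N=k$ if $k\le N/2$ and $(k)_N=k-N$ otherwise. (In the paper, $\widetilde{\mathbf{X}}$ arises from writing the OTFS delay–Doppler input–output relation $\mathbf{y}=\widetilde{\mathbf{X}}\mathbf{h}+\mathbf{w}$, and $\mathbf{G}$ is the gain matrix of the matched filter estimate $\widetilde{\mathbf{X}}^{\mathrm H}\mathbf{y}$.) *)

(* Defs.v *)
From HB Require Import structures.
From mathcomp Require Import all_boot all_order all_algebra.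
From mathcomp Require Import all_classical all_reals all_analysis.
From mathcomp Require Import complex.
Set Implicit Arguments. Unset Strict Implicit. Unset Printing Implicit Defensive.
Import Order.TTheory GRing.Theory Num.Theory.
Local Open Scope ring_scope.
Local Open Scope complex_scope.

Section OTFS.
Variable R : realType.

Definition expi (t : R) : R[i] := cos t +i* sin t.

Lemma submod_proof (N : nat) (a b : 'I_N) : ((a + N - b) %% N < N)%N.
Proof. by rewrite ltn_pmod // (leq_ltn_trans (leq0n a) (ltn_ord a)). Qed.
Definition submod (N : nat) (a b : 'I_N) : 'I_N := Ordinal (submod_proof a b).

Definition centred (N k : nat) : int :=
  if (2 * k <= N)%N then k%:Z else k%:Z - N%:Z.

(* QPSK symbol of power Ps: sqrt(Ps/2) (+-1 +- i); the pair of booleans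
   selects the signs of the real and imaginary parts. *)
Definition sgnb (b : bool) : R := if b then 1 else -1.
Definition qpsk (Ps : R) (s : bool * bool) : R[i] :=
  (Num.sqrt (Ps / 2))%:C * (sgnb s.1 +i* sgnb s.2).

Definition grid (N M : nat) := {ffun 'I_N * 'I_M -> bool * bool}.

Lemma kof_proof (N M : nat) (p : 'I_(N * M)) : (p %% N < N)%N.
Proof.
case: N p => [|N] p; last by rewrite ltn_pmod.
by case: p => /= m; rewrite mul0n.
Qed.
Lemma lof_proof (N M : nat) (p : 'I_(N * M)) : (p %/ N < M)%N.
Proof.
case: N p => [|N] p; first by case: p => /= m; rewrite mul0n.
case: p => /= m hm; by rewrite ltn_divLR // mulnC.
Qed.
Definition kof (N M : nat) (p : 'I_(N * M)) : 'I_N := Ordinal (kof_proof p).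
Definition lof (N M : nat) (p : 'I_(N * M)) : 'I_M := Ordinal (lof_proof p).

Definition Xt (N M : nat) (Ps : R) (x : grid N M) : 'M[R[i]]_(N * M) :=
  \matrix_(p, q)
    let k1 := kof p in let l1 := lof p in
    let k2 := kof q in let l2 := lof q in
    let dl := submod l1 l2 in
    let base := qpsk Ps (x (submod k1 k2, dl)) *
      expi (2 * pi * ((centred N k2)%:~R * (dl : nat)%:R) / (M * N)%:R) in
    if (l1 < l2)%N then base * expi (- (2 * pi * (k1 : nat)%:R / N%:R))
    else base.

Definition ctrmx (m n : nat) (A : 'M[R[i]]_(m, n)) : 'M[R[i]]_(n, m) :=
  map_mx conjc A^T.

Definition Gmx (N M : nat) (Ps : R) (x : grid N M) : 'M[R[i]]_(N * M) :=
  ctrmx (Xt Ps x) *m Xt Ps x.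

(* Expectation over i.i.d. uniform QPSK symbols: the joint law of the grid
   is uniform on all 4^(NM) realisations. *)
Definition Exp (N M : nat) (f : grid N M -> R[i]) : R[i] :=
  (#|{: grid N M}|%:R)^-1 * \sum_(x : grid N M) f x.

Definition Var (N M : nat) (f : grid N M -> R[i]) : R[i] :=
  Exp (fun x => (f x - Exp f) * conjc (f x - Exp f)).

End OTFS.

(* Main.v *)
Require Import Defs.
From HB Require Import structures.
From mathcomp Require Import all_boot all_order all_algebra.
From mathcomp Require Import all_classical all_reals all_analysis.
From mathcomp Require Import complex.
From mathcomp Require Import ring lra zify.
Import Order.TTheory GRing.Theory Num.Theory.

Lemma submod_inj_r N (a b c : 'I_N) : submod a b = submod a c -> b = c.
Proof.
move=> /(congr1 val) /= h; apply/val_inj => /=.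
have ha := ltn_ord a; have hb := ltn_ord b; have hc := ltn_ord c.
have e1 : a + N = (a + N - b) + b by lia.
have e2 : a + N = (a + N - c) + c by lia.
have : (a + N - b) + b = (a + N - c) + c %[mod N] by rewrite -e1 -e2.
rewrite -modnDml h modnDml => /eqP; rewrite eqn_modDl !modn_small // => /eqP.
done.
Qed.

Lemma submod_inj_l N (a b c : 'I_N) : submod a c = submod b c -> a = b.
Proof.
move=> /(congr1 val) /= h; apply/val_inj => /=.
have ha := ltn_ord a; have hb := ltn_ord b; have hc := ltn_ord c.
have e1 : a + N - c = a + (N - c) by lia.
have e2 : b + N - c = b + (N - c) by lia.
move: h; rewrite e1 e2 => /eqP; rewrite eqn_modDr !modn_small // => /eqP.
done.
Qed.

Lemma kl_inj N M (p q : 'I_(N * M)) : kof p = kof q -> lof p = lof q -> p = q.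
Proof.
move=> /(congr1 val) /= h1 /(congr1 val) /= h2; apply/val_inj => /=.
by rewrite (divn_eq p N) (divn_eq q N) h1 h2.
Qed.

Local Open Scope ring_scope.
Local Open Scope complex_scope.

Section H.
Variable R : realType.

Lemma qpskN (Ps : R) b1 b2 : qpsk Ps (~~b1, ~~b2) = - qpsk Ps (b1, b2).
Proof.
rewrite /qpsk /=; case: b1; case: b2; rewrite /sgnb /=; simpc => //.
Qed.

Lemma qpskI (Ps : R) b1 b2 : qpsk Ps (~~b2, b1) = 'i * qpsk Ps (b1, b2).
Proof.
rewrite /qpsk /=; case: b1; case: b2; rewrite /sgnb /=; simpc => //.
Qed.

Lemma qpsk_norm (Ps : R) s : 0 <= Ps -> qpsk Ps s * (conjc (qpsk Ps s)) = Ps%:C.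
Proof.
move=> hP; case: s => b1 b2.
have h : Num.sqrt (Ps / 2) ^+ 2 = Ps / 2 by rewrite sqr_sqrtr // divr_ge0.
rewrite /qpsk /=; case: b1; case: b2; rewrite /sgnb /=; simpc;
 apply/eqP; rewrite eq_complex /= ; apply/andP; split; apply/eqP;
 rewrite -?expr2 ?h; lra.
Qed.

Lemma expi_norm (t : R) : expi t * (conjc (expi t)) = 1.
Proof.
rewrite /expi; simpc; apply/eqP; rewrite eq_complex /=; apply/andP; split; apply/eqP.
  by rewrite -!expr2 cos2Dsin2.
by rewrite mulrC addNr.
Qed.


Lemma sqr_ii : 'i * 'i = -1 :> R[i].
Proof. by rewrite -expr2 sqr_i. Qed.

Section E.
Variables N M : nat.
Implicit Types f g : grid N M -> R[i].

Lemma eq_Exp f g : (forall x, f x = g x) -> Exp f = Exp g.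
Proof. by move=> h; rewrite /Exp; congr (_ * _); apply: eq_bigr => x _. Qed.

Lemma ExpZ c f : Exp (fun x => c * f x) = c * Exp f.
Proof. by rewrite /Exp -mulr_sumr mulrCA. Qed.

Lemma Exp_sumT (k : nat) (F : 'I_k -> grid N M -> R[i]) :
  Exp (fun x => \sum_i F i x) = \sum_i Exp (F i).
Proof.
rewrite /Exp exchange_big /= mulr_sumr; apply: eq_bigr => i _ //.
Qed.

Lemma Exp_sum (k : nat) (P : pred 'I_k) (F : 'I_k -> grid N M -> R[i]) :
  Exp (fun x => \sum_(i | P i) F i x) = \sum_(i | P i) Exp (F i).
Proof.
rewrite /Exp exchange_big /= mulr_sumr; apply: eq_bigr => i _ //.
Qed.

Lemma card_grid_neq0 : (#|{: grid N M}|%:R : R[i]) != 0.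
Proof.
rewrite pnatr_eq0 -lt0n; apply/card_gt0P; by exists [ffun => (true, true)].
Qed.

Lemma Exp_cst (c : R[i]) : Exp (fun _ : grid N M => c) = c.
Proof.
rewrite /Exp sumr_const -[c *+ _]mulr_natr mulrCA (_ : #|xpredT| = #|grid N M|) // mulVf ?mulr1 //; exact: card_grid_neq0.
Qed.

Lemma Exp_odd f (phi : grid N M -> grid N M) :
  injective phi -> (forall x, f (phi x) = - f x) -> Exp f = 0.
Proof.
move=> hinj hf; rewrite /Exp.
have h : \sum_x f x = - \sum_x f x.
  rewrite {1}(reindex_inj hinj) /= -sumrN; apply: eq_bigr => x _; exact: hf.
suff -> : \sum_x f x = 0 by rewrite mulr0.
move/eqP: h; rewrite -subr_eq0 opprK -mulr2n mulrn_eq0 /= => /eqP; done.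
Qed.

Definition flip (c : 'I_N * 'I_M) (t : bool * bool -> bool * bool) (x : grid N M) : grid N M :=
  [ffun d => if d == c then t (x d) else x d].

Lemma flipE c t x d : flip c t x d = if d == c then t (x d) else x d.
Proof. by rewrite ffunE. Qed.

Lemma flip_inj c t : injective t -> injective (flip c t).
Proof.
move=> ht x y h; apply/ffunP => d; have := congr1 (fun z : grid N M => z d) h.
by rewrite !flipE; case: (d == c) => // /ht.
Qed.
End E.


Definition negb2 (s : bool * bool) := (~~ s.1, ~~ s.2).
Definition rotb (s : bool * bool) := (~~ s.2, s.1).
Lemma negb2_inj : injective negb2. Proof. by move=> [[] []] [[] []]. Qed.
Lemma rotb_inj : injective rotb. Proof. by move=> [[] []] [[] []]. Qed.
Lemma qpsk_negb2 (Ps : R) s : qpsk Ps (negb2 s) = - qpsk Ps s.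
Proof. by case: s => b1 b2; rewrite qpskN. Qed.
Lemma qpsk_rotb (Ps : R) s : qpsk Ps (rotb s) = 'i * qpsk Ps s.
Proof. by case: s => b1 b2; rewrite qpskI. Qed.

End H.
Arguments flip {N M}.
Arguments flipE {N M}.
Arguments flip_inj {N M}.
Arguments Exp_odd {R N M}.
Arguments eq_Exp {R N M f g}.
Arguments ExpZ {R N M}.
Arguments Exp_sumT {R N M k}.
Arguments Exp_cst {R N M}.


Section Main.
Variable R : realType.
Variables N M : nat.
Variable Ps : R.
Local Notation I := ('I_N * 'I_M)%type.
Local Notation Q := (qpsk Ps).

Definition Aix (r p : 'I_(N*M)) : I := (submod (kof r) (kof p), submod (lof r) (lof p)).
Definition ph (r p : 'I_(N*M)) : R[i] :=
  expi (2 * pi * ((centred N (kof p))%:~R * ((submod (lof r) (lof p)) : nat)%:R) / (M * N)%:R) *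
  (if (lof r < lof p)%N then expi (- (2 * pi * ((kof r : nat)%:R) / N%:R)) else 1).

Lemma Xt_eq (x : grid N M) r p : Xt Ps x r p = Q (x (Aix r p)) * ph r p.
Proof. by rewrite /Xt mxE /= /ph /Aix; case: ifP => _; rewrite ?mulr1 mulrA. Qed.

Lemma unitM (u v : R[i]) : u * (conjc u) = 1 -> v * (conjc v) = 1 -> (u * v) * (conjc (u * v)) = 1.
Proof. by move=> hu hv; rewrite rmorphM /= mulrACA hu hv mulr1. Qed.

Lemma conjM2 (u v : R[i]) : (conjc (u * v)) = (conjc u) * (conjc v).
Proof. exact: rmorphM. Qed.

Lemma conj_term (c u v : R[i]) : conjc (c * (conjc u * v)) = conjc c * (u * conjc v).
Proof. by rewrite !conjM2 conjcK. Qed.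

Lemma conj_sum (k : nat) (F : 'I_k -> R[i]) : conjc (\sum_i F i) = \sum_i conjc (F i).
Proof. exact: rmorph_sum. Qed.

Lemma unitCM (u v : R[i]) : u * (conjc u) = 1 -> v * (conjc v) = 1 -> ((conjc u) * v) * (conjc ((conjc u) * v)) = 1.
Proof.
move=> hu hv; rewrite conjM2 conjcK.
transitivity ((u * (conjc u)) * (v * (conjc v))); first by ring.
by rewrite hu hv mulr1.
Qed.

Lemma ph_norm r p : ph r p * (conjc (ph r p)) = 1.
Proof.
rewrite /ph; apply: unitM; first exact: expi_norm.
by case: ifP => _; [exact: expi_norm | rewrite mul1r; exact: (rmorph1 (@conjc R))].
Qed.

Definition w p q r := (conjc (ph r p)) * ph r q.

Lemma w_norm p q r : w p q r * (conjc (w p q r)) = 1.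
Proof.
exact: unitCM (ph_norm r p) (ph_norm r q).
Qed.

Lemma Gmx_eq (x : grid N M) p q : Gmx Ps x p q =
  \sum_r w p q r * ((conjc (Q (x (Aix r p)))) * Q (x (Aix r q))).
Proof.
rewrite /Gmx /ctrmx; move: (Xt Ps x) (Xt_eq x) => X hX.
rewrite !mxE; apply: eq_bigr => r _; rewrite !mxE !hX conjM2 /w; ring.
Qed.

Lemma Aix_neq r p q : p != q -> Aix r p != Aix r q.
Proof.
apply: contra => /eqP h; apply/eqP; apply: kl_inj.
  exact: submod_inj_r (congr1 fst h).
exact: submod_inj_r (congr1 snd h).
Qed.

Lemma Aix_inj p r r' : Aix r p = Aix r' p -> r = r'.
Proof.
move=> h; apply: kl_inj; [exact: submod_inj_l (congr1 fst h) | exact: submod_inj_l (congr1 snd h)].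
Qed.

Lemma Exp_pair (a b : I) : a != b ->
  Exp (fun x : grid N M => (conjc (Q (x a))) * Q (x b)) = 0.
Proof.
move=> hab; apply: (@Exp_odd _ _ _ _ (flip b negb2)); first exact: flip_inj negb2_inj.
by move=> x; rewrite !flipE eqxx (negbTE hab) qpsk_negb2 mulrN.
Qed.

Lemma Exp_quad (a b a' b' : I) : a != b -> a' != b' -> a != a' -> b != b' ->
  Exp (fun x : grid N M => (conjc (Q (x a))) * Q (x b) * (Q (x a') * (conjc (Q (x b'))))) = 0.
Proof.
move=> hab ha'b' haa' hbb'.
have hb'b : b' != b by rewrite eq_sym.
case: (eqVneq a' b) => [e|ne].
  subst a'; apply: (@Exp_odd _ _ _ _ (flip b rotb)); first exact: flip_inj rotb_inj.
  move=> x; rewrite !flipE eqxx (negbTE hab) (negbTE hb'b) !qpsk_rotb.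
  set A := Q (x a); set B := Q (x b); set C := Q (x b').
  transitivity ('i * 'i * ((conjc A) * B * (B * (conjc C)))); first by ring.
  by rewrite sqr_ii mulN1r.
apply: (@Exp_odd _ _ _ _ (flip b negb2)); first exact: flip_inj negb2_inj.
move=> x; rewrite !flipE eqxx (negbTE hab) (negbTE ne) (negbTE hb'b) qpsk_negb2.
by rewrite mulrN !mulNr.
Qed.

End Main.
Arguments Gmx_eq {R N M}.
Arguments Exp_pair {R N M}.
Arguments Exp_quad {R N M}.
Arguments Aix_neq {N M}.
Arguments Aix_inj {N M}.
Arguments w_norm {R N M}.
Arguments Aix {N M}.
Arguments w {R N M}.
Arguments ph {R N M}.


Theorem lemma1 (R : realType) (M N : nat) (Ps : R)
  (hM : (0 < M)%N) (hN : (0 < N)%N) (hPs : 0 < Ps)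
  (p q : 'I_(N * M)) (hpq : p != q) :
  Exp (fun x : grid N M => Gmx Ps x p q) = 0 /\
  Var (fun x : grid N M => Gmx Ps x p q) = (M * N)%:R * (Ps ^+ 2)%:C.
Proof.
have hE : Exp (fun x : grid N M => Gmx Ps x p q) = 0.
  rewrite (eq_Exp (fun x => Gmx_eq Ps x p q)) Exp_sumT; apply: big1 => r _.
  by rewrite ExpZ Exp_pair ?mulr0 // Aix_neq.
split => //.
rewrite /Var hE.
set T := fun (r r' : 'I_(N * M)) (x : grid N M) =>
  (conjc (qpsk Ps (x (Aix r p)))) * qpsk Ps (x (Aix r q)) *
  (qpsk Ps (x (Aix r' p)) * (conjc (qpsk Ps (x (Aix r' q))))).
rewrite (eq_Exp (g := fun x => \sum_r \sum_r' (w p q r * (conjc (w p q r'))) * T r r' x)); last first.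
  move=> x; rewrite subr0 Gmx_eq conj_sum mulr_suml; apply: eq_bigr => r _.
  rewrite mulr_sumr; apply: eq_bigr => r' _; rewrite conj_term /T; ring.
rewrite Exp_sumT.
transitivity (\sum_(r < N * M) (Ps ^+ 2)%:C).
  apply: eq_bigr => r _; rewrite Exp_sumT (bigD1 r) //= big1 ?addr0.
    rewrite ExpZ w_norm mul1r.
    rewrite (eq_Exp (g := fun _ => (Ps ^+ 2)%:C)) ?Exp_cst // => x.
    rewrite /T.
    set A := qpsk Ps (x (Aix r p)); set B := qpsk Ps (x (Aix r q)).
    transitivity ((A * (conjc A)) * (B * (conjc B))); first by ring.
    by rewrite !qpsk_norm ?ltW // -rmorphM expr2.
  move=> r' hr'; rewrite ExpZ /T Exp_quad ?mulr0 ?Aix_neq //.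
    by apply/eqP => /Aix_inj/eqP; rewrite eq_sym (negbTE hr').
  by apply/eqP => /Aix_inj/eqP; rewrite eq_sym (negbTE hr').
rewrite sumr_const (_ : #|xpredT| = N * M)%N ?card_ord // -mulr_natl mulnC. by rewrite mulr1 mulr_natl.
Qed.
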